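(* Let $V$ be a finite set of truth values containing distinct elements $1,0$, and let $\models$ be an intersective mixed consequence truth-relation with minimal representation $\models_{\mathcal{D}_p^1,\mathcal{D}_c^1}\cap\dots\cap\models_{\mathcal{D}_p^K,\mathcal{D}_c^K}$. Let $f:V^n\to V$ and let $\mathcal{B}^p,\mathcal{B}^c\subseteq\mathcal{P}(\{1,\dots,n\})\times\mathcal{P}(\{1,\dots,n\})$. Then $f$ satisfies the regularity rule $(\mathcal{B}^p,\mathcal{B}^c)$ at the level of truth values, i.e. for all $\gamma,\delta\subseteq V$ and $x_1,\dots,x_n\in V$: $\gamma\cup\{f(x_1,\dots,x_n)\}\models\delta$ iff for all $(B_p,B_c)\in\mathcal{B}^p$: $\gamma\cup\{x_i:i\in B_p\}\models\{x_i:i\in B_c\}\cup\delta$, and $\gamma\models\{f(x_1,\dots,x_n)\}\cup\delta$ iff for all $(B_p,B_c)\in\mathcal{B}^c$: $\gamma\cup\{x_i:i\in B_p\}\models\{x_i:i\in B_c\}\cup\delta$, if and only if for every $k\in\{1,\dots,K\}$ and all $x_1,\dots,x_n\in V$: $f(x_1,\dots,x_n)\notin\mathcal{D}_p^k$ iff for all $(B_p,B_c)\in\mathcal{B}^p$: ($\{x_i:i\in B_p\}\subseteq\mathcal{D}_p^k\Rightarrow\{x_i:i\in B_c\}\cap\mathcal{D}_c^k\neq\emptyset$); and $f(x_1,\dots,x_n)\in\mathcal{D}_c^k$ iff for all $(B_p,B_c)\in\mathcal{B}^c$: ($\{x_i:i\in B_p\}\subseteq\mathcal{D}_p^k\Rightarrow\{x_i:i\in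 B_c\}\cap\mathcal{D}_c^k\neq\emptyset$).
   Context: A set of designated values is a subset $\mathcal{D}\subseteq V$ with $1\in\mathcal{D}$, $0\notin\mathcal{D}$. For such $\mathcal{D}_p,\mathcal{D}_c$, the mixed consequence truth-relation is $\gamma\models_{\mathcal{D}_p,\mathcal{D}_c}\delta$ iff ($\gamma\subseteq\mathcal{D}_p\Rightarrow\delta\cap\mathcal{D}_c\neq\emptyset$), for $\gamma,\delta\subseteq V$. An intersective mixed consequence truth-relation is a finite intersection of mixed ones; a list of mixed relations whose intersection is it is a representation, and a minimal representation is one with the least possible number of members. Empty conjunctions count as true. *)

(* Defs.v *)
From mathcomp Require Import all_boot.
Set Implicit Arguments. Unset Strict Implicit. Unset Printing Implicit Defensive.

Section TruthRel.
Variable V : finType.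

Definition designated (one zero : V) (D : {set V}) : Prop :=
  one \in D /\ zero \notin D.

Definition mixed (Dp Dc : {set V}) (gamma delta : {set V}) : bool :=
  (gamma \subset Dp) ==> (delta :&: Dc != set0).

Definition represents (one zero : V)
  (rel : {set V} -> {set V} -> bool) (reps : seq ({set V} * {set V})) : Prop :=
  (forall p, p \in reps -> designated one zero p.1 /\ designated one zero p.2) /\
  (forall gamma delta,
     rel gamma delta = all (fun p => mixed p.1 p.2 gamma delta) reps).

Definition minimal_rep (one zero : V)
  (rel : {set V} -> {set V} -> bool) (reps : seq ({set V} * {set V})) : Prop :=
  represents one zero rel reps /\
  (forall reps', represents one zero rel reps' -> size reps <= size reps').

End TruthRel.

(* Main.v *)
Require Import Defs.
From mathcomp Require Import all_boot.

Definition Cnd (V : finType) (p : {set V} * {set V}) (g d : {set V}) : bool :=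
  (g \subset p.1) && (d :&: p.2 == set0).
Arguments Cnd {V}.

Lemma set1I0 (V : finType) (a : V) (D : {set V}) :
  ([set a] :&: D == set0) = (a \notin D).
Proof.
apply/eqP/idP.
  move=> H; apply/negP => aD.
  have : a \in [set a] :&: D by rewrite inE set11 aD.
  by rewrite H inE.
move=> aD; apply/setP => y; rewrite !inE; apply/negP => /andP [/eqP -> ].
by apply/negP.
Qed.

Lemma mixed_U1 (V : finType) (p : {set V} * {set V}) a g d :
  mixed p.1 p.2 (a |: g) d = Cnd p g d ==> (a \notin p.1).
Proof.
rewrite /mixed /Cnd subUset sub1set.
by case: (a \in p.1); case: (g \subset p.1); case: (d :&: p.2 == set0).
Qed.

Lemma mixed_U1r (V : finType) (p : {set V} * {set V}) a g d :
  mixed p.1 p.2 g (a |: d) = Cnd p g d ==> (a \in p.2).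
Proof.
rewrite /mixed /Cnd setIUl setU_eq0 set1I0.
by case: (a \in p.2); case: (g \subset p.1); case: (d :&: p.2 == set0).
Qed.

Lemma mixed_UU (V : finType) (p : {set V} * {set V}) A B g d :
  mixed p.1 p.2 (g :|: A) (B :|: d) = Cnd p g d ==> mixed p.1 p.2 A B.
Proof.
rewrite /mixed /Cnd setIUl setU_eq0 subUset.
by case: (A \subset p.1); case: (g \subset p.1); case: (d :&: p.2 == set0);
  case: (B :&: p.2 == set0).
Qed.

Lemma all_forall (V : finType) (I : finType) (S : {set I}) (reps : seq ({set V} * {set V}))
  (P : ({set V} * {set V}) -> bool) (Q : ({set V} * {set V}) -> I -> bool) :
  [forall B in S, all (fun p => P p ==> Q p B) reps] =
  all (fun p => P p ==> [forall B in S, Q p B]) reps.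
Proof.
apply/forallP/allP.
  move=> H p pr; apply/implyP => Pp; apply/forallP => B; apply/implyP => BS.
  by have := H B; rewrite BS /= => /allP /(_ p pr); rewrite Pp.
move=> H B; apply/implyP => BS; apply/allP => p pr; apply/implyP => Pp.
by have := H p pr; rewrite Pp /= => /forallP /(_ B); rewrite BS.
Qed.

Lemma all_single (V : finType) (reps : seq ({set V} * {set V})) g d p
  (X : ({set V} * {set V}) -> bool) :
  p \in reps -> Cnd p g d -> (forall q, q \in reps -> Cnd q g d -> q = p) ->
  all (fun q => Cnd q g d ==> X q) reps = X p.
Proof.
move=> pr Cp Hu; apply/allP/idP.
  by move=> /(_ p pr); rewrite Cp.
by move=> Xp q qr; apply/implyP => Cq; rewrite (Hu q qr Cq).
Qed.

Theorem theorem3p11 (V : finType) (one zero : V) (Hneq : one != zero)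
  (rel : {set V} -> {set V} -> bool) (reps : seq ({set V} * {set V}))
  (Hmin : minimal_rep one zero rel reps)
  (n : nat) (f : ('I_n -> V) -> V)
  (Bp Bc : {set ({set 'I_n} * {set 'I_n})}) :
  (forall (gamma delta : {set V}) (x : 'I_n -> V),
     (rel (f x |: gamma) delta =
        [forall B in Bp, rel (gamma :|: x @: B.1) (x @: B.2 :|: delta)]) /\
     (rel gamma (f x |: delta) =
        [forall B in Bc, rel (gamma :|: x @: B.1) (x @: B.2 :|: delta)]))
  <->
  (forall p, p \in reps -> forall x : 'I_n -> V,
     ((f x \notin p.1) =
        [forall B in Bp, (x @: B.1 \subset p.1) ==> (x @: B.2 :&: p.2 != set0)]) /\
     ((f x \in p.2) =
        [forall B in Bc, (x @: B.1 \subset p.1) ==> (x @: B.2 :&: p.2 != set0)])).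
Proof.
case: Hmin => [[Hdes Hrel] Hsmall].
have E1 : forall g d x, rel (f x |: g) d = all (fun p => Cnd p g d ==> (f x \notin p.1)) reps.
  by move=> g d x; rewrite Hrel; apply: eq_all => p; rewrite mixed_U1.
have E2 : forall g d x, rel g (f x |: d) = all (fun p => Cnd p g d ==> (f x \in p.2)) reps.
  by move=> g d x; rewrite Hrel; apply: eq_all => p; rewrite mixed_U1r.
have E3 : forall (S : {set ({set 'I_n} * {set 'I_n})}) g d (x : 'I_n -> V),
   [forall B in S, rel (g :|: x @: B.1) (x @: B.2 :|: d)] =
   all (fun p => Cnd p g d ==> [forall B in S, mixed p.1 p.2 (x @: B.1) (x @: B.2)]) reps.
  move=> S g d x; rewrite -all_forall; apply: eq_forallb => B.
  by congr (_ ==> _); rewrite Hrel; apply: eq_all => p; rewrite mixed_UU.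
split.
  move=> H p pr x.
  have Cp : Cnd p p.1 (~: p.2) by rewrite /Cnd subxx /= setIC setICr.
  have Hu : forall q, q \in reps -> Cnd q p.1 (~: p.2) -> q = p.
    move=> q qr /andP [s1 /eqP s2]; apply/eqP; apply/negPn/negP => qp.
    have s2' : q.2 \subset p.2.
      apply/subsetP => v vq; apply/negPn/negP => vp.
      have : v \in ~: p.2 :&: q.2 by rewrite !inE vp vq.
      by rewrite s2 inE.
    have Hrep : represents one zero rel (rem p reps).
      split.
        by move=> r /mem_rem; apply: Hdes.
      move=> g d; rewrite Hrel (perm_all _ (perm_to_rem pr)) /=.
      case Ha: (all _ (rem p reps)); rewrite ?andbF // andbT.
      have qr' : q \in rem p reps by exact: (rem_mem qp qr).
      have := allP Ha q qr'; rewrite /mixed => /implyP Hq; apply/implyP => gp.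
      have Hq' : d :&: q.2 != set0 by apply: Hq; exact: subset_trans gp s1.
      apply: contra Hq' => /eqP e; rewrite -subset0 -e; exact: setIS.
    have := Hsmall _ Hrep; rewrite size_rem //.
    have hs : 0 < size reps by move: pr; case: (reps).
    by case: (size reps) hs => // m _; rewrite /= ltnn.
  have [H1 H2] := H p.1 (~: p.2) x.
  split.
    by move: H1; rewrite E1 E3 !(@all_single _ _ _ _ _ _ pr Cp Hu).
  by move: H2; rewrite E2 E3 !(@all_single _ _ _ _ _ _ pr Cp Hu).
move=> H g d x; rewrite E1 E2 !E3; split; apply: eq_in_all => p pr;
  by have [e1 e2] := H p pr x; rewrite ?e1 ?e2.
Qed.
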